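(* Let $n\ge1$ and let $f:\mathbb{R}^n\to[0,\infty)$ be an isotropic function. Let $x\in\mathbb{R}^n$, $v>0$, and define $g(y)=f(y)\exp\left(-\frac{|x-y|^2}{2v}\right)$ for $y\in\mathbb{R}^n$ (an integrable function). Suppose $X$ is a random vector in $\mathbb{R}^n$ whose density is proportional to $g$. Then (i) $\mathbb{E}|X-x|^2\le n+|x|^2$; (ii) $|\mathbb{E}X-x|\le\sqrt n+|x|$.
   Context: A function $f:\mathbb{R}^n\to[0,\infty)$ is isotropic if it is the probability density of a random vector in $\mathbb{R}^n$ with zero mean and identity covariance matrix. $|\cdot|$ is the Euclidean norm. *)

(* Defs.v *)
From HB Require Import structures.
From mathcomp Require Import all_boot all_order all_algebra.
From mathcomp Require Import all_classical all_reals all_analysis.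
Set Implicit Arguments. Unset Strict Implicit. Unset Printing Implicit Defensive.
Import Order.TTheory GRing.Theory Num.Theory.
Local Open Scope classical_set_scope.
Local Open Scope ring_scope.

(* Vectors of R^n are represented as n.-tuple R, which MathComp-Analysis
   equips with the product (= Borel) sigma-algebra. *)

Definition vsub (R : realType) (n : nat) (x y : n.-tuple R) : n.-tuple R :=
  mktuple (fun i => tnth x i - tnth y i).

Definition sqnorm (R : realType) (n : nat) (x : n.-tuple R) : R :=
  \sum_(i < n) tnth x i ^+ 2.

Definition enorm (R : realType) (n : nat) (x : n.-tuple R) : R :=
  Num.sqrt (sqnorm x).

(* mu is the Lebesgue measure on (the Borel sets of) R^n: the (unique)
   measure giving every box ]a,b] its volume prod_i (b_i - a_i)^+. *)
Definition is_lebesgue_measure (R : realType) (n : nat)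
  (mu : {measure set (n.-tuple R) -> \bar R}) : Prop :=
  forall a b : n.-tuple R,
    mu [set y | forall i, tnth a i < tnth y i <= tnth b i] =
    (\prod_(i < n) Num.max (tnth b i - tnth a i) 0)%:E.

(* f is isotropic: the probability density (w.r.t. mu) of a random vector
   with zero mean and identity covariance matrix. *)
Definition isotropic (R : realType) (n : nat)
  (mu : {measure set (n.-tuple R) -> \bar R}) (f : n.-tuple R -> R) : Prop :=
  [/\ measurable_fun setT f,
      (forall y, 0 <= f y),
      (\int[mu]_y (f y)%:E = 1)%E,
      (forall i : 'I_n, mu.-integrable setT (fun y => (tnth y i * f y)%:E) /\
         (\int[mu]_y (tnth y i * f y)%:E = 0)%E) &
      (forall i j : 'I_n,
         mu.-integrable setT (fun y => (tnth y i * tnth y j * f y)%:E) /\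
         (\int[mu]_y (tnth y i * tnth y j * f y)%:E = (i == j)%:R%:E)%E)].

Definition gtilt (R : realType) (n : nat) (f : n.-tuple R -> R)
  (x : n.-tuple R) (v : R) (y : n.-tuple R) : R :=
  f y * expR (- (sqnorm (vsub x y) / (2 * v))).

Definition meanv (R : realType) (d : measure_display) (T : measurableType d)
  (P : probability T R) (n : nat) (X : T -> n.-tuple R) : n.-tuple R :=
  mktuple (fun i => fine (\int[P]_w (tnth (X w) i)%:E)%E).

(* Main.v *)
Require Import Defs.
From HB Require Import structures.
From mathcomp Require Import all_boot all_order all_algebra.
From mathcomp Require Import all_classical all_reals all_analysis measurable_realfun.
From mathcomp Require Import ring lra.
Import Order.TTheory GRing.Theory Num.Theory.
Local Open Scope classical_set_scope.
Local Open Scope ring_scope.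
Section S.
Context (R : realType) (n : nat).
Implicit Types x y : n.-tuple R.

Lemma sqnormE x y : sqnorm (vsub y x) = \sum_(i < n) (tnth y i - tnth x i) ^+ 2.
Proof. by rewrite /sqnorm; apply: eq_bigr => i _; rewrite tnth_mktuple. Qed.

Lemma sqnorm_vsubC x y : sqnorm (vsub x y) = sqnorm (vsub y x).
Proof. by rewrite !sqnormE; apply: eq_bigr => i _; rewrite -sqrrN opprB. Qed.

Lemma sqnorm_ge0 x : 0 <= sqnorm x.
Proof. by apply: sumr_ge0 => i _; rewrite sqr_ge0. Qed.

Lemma le_sqnorm x y (i : 'I_n) : (tnth y i - tnth x i) ^+ 2 <= sqnorm (vsub y x).
Proof.
rewrite sqnormE (bigD1 i) //= lerDl; apply: sumr_ge0 => j _; exact: sqr_ge0.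
Qed.

Lemma measurable_h x : measurable_fun setT (fun y : n.-tuple R => sqnorm (vsub y x)).
Proof.
rewrite (_ : (fun y => _) = (fun y => \sum_(i <- index_enum 'I_n) (tnth y i - tnth x i) ^+ 2)); last first.
  by apply/funext => y; rewrite sqnormE.
apply: measurable_sum => i; apply: measurable_funX; apply: measurable_funB => //.
exact: measurable_tnth.
Qed.

End S.
Section dens.
Context d (T : measurableType d) (R : realType).
Variables (nu mu : {measure set T -> \bar R}) (g : T -> R).
Hypothesis mg : measurable_fun setT g.
Hypothesis g0 : forall x, 0 <= g x.
Hypothesis hnu : forall A, measurable A -> nu A = (\int[mu]_(x in A) (g x)%:E)%E.
Import HBNNSimple.
Local Open Scope ereal_scope.

Lemma dens_change (f : T -> \bar R) (E : set T) : (forall x, 0 <= f x) ->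
    measurable E -> measurable_fun E f ->
  \int[mu]_(x in E) (f x * (g x)%:E) = \int[nu]_(x in E) f x.
Proof.
move=> f0 mE mf.
have mgE : measurable_fun E (fun x => (g x)%:E).
  by apply/measurable_funTS/measurable_EFinP.
pose h := nnsfun_approx mE mf.
have -> : \int[nu]_(x in E) f x =
    lim (\int[nu]_(x in E) (EFin \o h n) x @[n --> \oo]).
  have fE x : E x -> f x = lim ((EFin \o h n) x @[n --> \oo]).
    by move=> Ex; apply/esym/cvg_lim => //; exact: cvg_nnsfun_approx.
  under eq_integral => x /[!inE] /fE -> //.
  apply: monotone_convergence => //.
  - move=> n; apply/measurable_EFinP.
    by apply: (measurable_funS measurableT) => //; exact/measurable_funP.
  - by move=> n x Ex //=; rewrite lee_fin.
  - by move=> x Ex a b ab; rewrite lee_fin; exact/lefP/nd_nnsfun_approx.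
have -> : \int[mu]_(x in E) (f x * (g x)%:E) =
    lim (\int[mu]_(x in E) ((EFin \o h n) x * (g x)%:E) @[n --> \oo]).
  have fg x : E x -> f x * (g x)%:E = lim (((EFin \o h n) x * (g x)%:E) @[n --> \oo]).
    by move=> Ex; apply/esym/cvg_lim => //; apply: cvgeZr;
      [by []|exact: cvg_nnsfun_approx].
  under eq_integral => x /[!inE] /fg -> //.
  apply: monotone_convergence => [//| | |].
  - move=> n; apply/emeasurable_funM => //; apply/measurable_funTS.
      exact/measurable_EFinP.
  - by move=> n x Ex /=; rewrite mule_ge0 ?lee_fin ?g0.
  - by move=> x Ex a b ab/=; rewrite lee_wpmul2r ?lee_fin ?g0//; exact/lefP/nd_nnsfun_approx.
suff suf n : \int[mu]_(x in E) ((EFin \o h n) x * (g x)%:E) =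
    \int[nu]_(x in E) (EFin \o h n) x.
  by under eq_fun do rewrite suf.
transitivity (\int[nu]_(x in E)
   (\sum_(y \in range (h n)) (y * \1_(h n @^-1` [set y]) x)%:E)); last first.
  by apply: eq_integral => t tE; rewrite /= fimfunE -fsumEFin.
have indich m r : measurable_fun E (fun x => (r * \1_(h m @^-1` [set r]) x)%:E).
  by apply: (measurable_comp measurableT) => //; exact: measurable_funM.
rewrite ge0_integral_fsum//; last by move=> m y Ey; exact: nnfun_muleindic_ge0.
transitivity (\int[mu]_(x in E) (\sum_(y \in range (h n))
    (y * \1_(h n @^-1` [set y]) x)%:E * (g x)%:E)).
  under [RHS]eq_integral => x xE.
    rewrite -ge0_mule_fsuml => [|y]; last exact: nnfun_muleindic_ge0.
    rewrite fsumEFin // -(fimfunE _ x); over.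
  by [].
rewrite ge0_integral_fsum//; last 2 first.
  - move=> y; apply: emeasurable_funM => //.
  - by move=> m y Ey; rewrite mule_ge0 ?lee_fin ?g0// -lee_fin EFinM nnfun_muleindic_ge0.
apply: eq_fsbigr => r rhn.
under [RHS]eq_integral do rewrite EFinM.
rewrite integralZl_indic_nnsfun => //.
under eq_integral do rewrite EFinM -muleA.
rewrite ge0_integralZl//.
- under eq_integral do rewrite muleC.
  rewrite (eq_integral ((fun x => (g x)%:E) \_ (h n @^-1` [set r]))); last first.
    by move=> x xE; rewrite epatch_indic.
  by rewrite -integral_mkcondr -hnu// integral_indic// setIC.
- apply: emeasurable_funM => //; exact/measurable_EFinP.
- by move=> t Et; rewrite mule_ge0 ?lee_fin ?g0.
- by move: rhn; rewrite inE => -[t _ <-]; rewrite lee_fin.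
Qed.
End dens.
Section A.
Context (R : realType) (n : nat) (mu : {measure set (n.-tuple R) -> \bar R})
  (f : n.-tuple R -> R) (x : n.-tuple R).
Hypothesis iso : isotropic mu f.
Local Open Scope ereal_scope.

Let mf : measurable_fun setT f. Proof. by case: iso. Qed.
Let f0 : forall y, (0 <= f y)%R. Proof. by case: iso. Qed.
Let int1 : \int[mu]_y (f y)%:E = 1. Proof. by case: iso. Qed.

Lemma int_f : mu.-integrable setT (fun y => (f y)%:E).
Proof.
apply/integrableP; split; first exact/measurable_EFinP.
under eq_integral do rewrite gee0_abs ?lee_fin//.
by rewrite int1 ltry.
Qed.

Lemma term_int (i : 'I_n) :
  mu.-integrable setT (fun y => ((tnth y i - tnth x i) ^+ 2 * f y)%:E) /\
  \int[mu]_y ((tnth y i - tnth x i) ^+ 2 * f y)%:E = (1 + tnth x i ^+ 2)%:E.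
Proof.
have [[i1 e1] [i2 e2]] : (mu.-integrable setT (fun y => (tnth y i * f y)%:E) /\
         (\int[mu]_y (tnth y i * f y)%:E = 0)) /\
     (mu.-integrable setT (fun y => (tnth y i * tnth y i * f y)%:E) /\
         (\int[mu]_y (tnth y i * tnth y i * f y)%:E = (i == i)%:R%:E)).
  by case: iso => _ _ _ h1 h2; split; [exact: h1|exact: h2].
rewrite eqxx in e2.
have E : (fun y => ((tnth y i - tnth x i) ^+ 2 * f y)%:E) =
  (fun y => ((tnth y i * tnth y i * f y)%:E + (- (2 * tnth x i))%:E * (tnth y i * f y)%:E)
     + (tnth x i ^+ 2)%:E * (f y)%:E).
  by apply/funext => y; rewrite -!EFinM -!EFinD; congr (_%:E); ring.
have ia : mu.-integrable setT (fun y => (tnth y i * tnth y i * f y)%:E + (- (2 * tnth x i))%:E * (tnth y i * f y)%:E).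
  by apply: integrableD => //; exact: integrableZl.
have ib : mu.-integrable setT (fun y => (tnth x i ^+ 2)%:E * (f y)%:E).
  by apply: integrableZl => //; exact: int_f.
rewrite E; split; first exact: integrableD.
rewrite integralD // integralD //; last exact: integrableZl.
rewrite !integralZl //; last exact: int_f.
by rewrite e1 e2 int1 mule0 adde0 mule1.
Qed.


Let h y := sqnorm (vsub y x).
Let m := (n%:R + sqnorm x)%R.

Lemma hf_int : mu.-integrable setT (fun y => (h y * f y)%:E) /\
  \int[mu]_y (h y * f y)%:E = m%:E.
Proof.
have E : (fun y => (h y * f y)%:E) =
   (fun y => \sum_(i <- index_enum 'I_n) ((tnth y i - tnth x i) ^+ 2 * f y)%:E).
  by apply/funext => y; rewrite sumEFin /h sqnormE mulr_suml.
rewrite E; split.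
  by apply: integrable_sum => // i _; case: (term_int i).
rewrite integral_sum //; last by move=> i; case: (term_int i).
under eq_bigr => i _ do rewrite (proj2 (term_int i)).
rewrite sumEFin big_split /= sumr_const card_ord /m /sqnorm; congr (_%:E).
Qed.

Variable v : R.
Hypothesis v0 : (0 < v)%R.
Let phi (t : R) := expR (- (t / (2 * v))).
Let gt := gtilt f x v.

Lemma gtE y : gt y = (f y * phi (h y))%R.
Proof. by rewrite /gt /gtilt sqnorm_vsubC. Qed.

Lemma phi_le1 t : (0 <= t)%R -> (phi t <= 1)%R.
Proof. by move=> t0; rewrite /phi expR_le1 oppr_le0 divr_ge0 // mulr_ge0 // ltW. Qed.

Lemma phi_anti s t : (s <= t)%R -> (phi t <= phi s)%R.
Proof.
by move=> st; rewrite /phi ler_expR lerN2 ler_pM2r // invr_gt0 mulr_gt0.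
Qed.

Lemma mh : measurable_fun setT h.
Proof. exact: measurable_h. Qed.

Lemma mgt : measurable_fun setT gt.
Proof.
rewrite (_ : gt = fun y => (f y * phi (h y))%R); last by apply/funext => y; rewrite gtE.
apply: measurable_funM => //; rewrite /phi.
apply: measurableT_comp => //.
apply: measurableT_comp => //.
apply: measurable_funM => //; exact: mh.
Qed.

Lemma gt_int : mu.-integrable setT (fun y => (gt y)%:E).
Proof.
apply: le_integrable (int_f) => //.
  by apply/measurable_EFinP; exact: mgt.
move=> y _; rewrite lee_fin gtE !ger0_norm ?mulr_ge0 ?expR_ge0 //.
by rewrite ler_piMr // phi_le1 // sqnorm_ge0.
Qed.

Lemma hgt_int : mu.-integrable setT (fun y => (h y * gt y)%:E).
Proof.
apply: le_integrable (proj1 hf_int) => //.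
  by apply/measurable_EFinP/measurable_funM; [exact: mh|exact: mgt].
have h0 y : (0 <= h y)%R by exact: sqnorm_ge0.
move=> y _; rewrite lee_fin gtE !ger0_norm ?mulr_ge0 ?expR_ge0 //.
by apply: ler_wpM2l => //; rewrite ler_piMr // ?phi_le1 // expR_ge0.
Qed.


Lemma keyA : \int[mu]_y (h y * gt y)%:E <= m%:E * \int[mu]_y (gt y)%:E.
Proof.
set p := phi m.
have pw y : (h y * gt y + (p * m) * f y <= m * gt y + p * (h y * f y))%R.
  rewrite gtE -subr_ge0.
  have -> : (m * (f y * phi (h y)) + p * (h y * f y) - (h y * (f y * phi (h y)) + p * m * f y)
     = f y * ((m - h y) * (phi (h y) - p)))%R by ring.
  apply: mulr_ge0 => //; case: (leP (h y) m) => hm.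
    by apply: mulr_ge0; rewrite subr_ge0 // phi_anti.
  by apply: mulr_le0; rewrite subr_le0 ?(ltW hm) // phi_anti // ltW.
have i1 := hgt_int; have i2 := gt_int; have [i3 e3] := hf_int; have i4 := int_f.
have := @le_integral _ _ _ mu setT measurableT
  (fun y => (h y * gt y)%:E + (p * m)%:E * (f y)%:E)
  (fun y => m%:E * (gt y)%:E + p%:E * (h y * f y)%:E).
rewrite !integralD //; try by apply: integrableZl.
rewrite !integralZl // e3 int1 mule1 -EFinM leeD2rE //; apply.
- by apply: integrableD => //; apply: integrableZl.
- by apply: integrableD => //; apply: integrableZl.
- by move=> y _; rewrite -!EFinM -!EFinD lee_fin pw.
Qed.

End A.

Lemma abs_le1sq (R : realType) (t : R) : `|t| <= 1 + t ^+ 2.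
Proof.
rewrite -[t ^+ 2](real_normK (num_real t)); have := normr_ge0 t; set a := `|t|; nra.
Qed.

Lemma sqrtD_le (R : realType) (a b : R) : 0 <= a -> 0 <= b ->
  Num.sqrt (a + b) <= Num.sqrt a + Num.sqrt b.
Proof.
move=> a0 b0.
rewrite -[leRHS]ger0_norm ?addr_ge0 ?sqrtr_ge0 // -sqrtr_sqr.
apply: ler_wsqrtr; rewrite sqrrD !sqr_sqrtr //; set u := (_ *+ 2); have : 0 <= u.
  by rewrite mulrn_wge0 // mulr_ge0 // sqrtr_ge0.
lra.
Qed.

Arguments gt_int {R n mu f x} iso {v} v0.
Arguments hgt_int {R n mu f x} iso {v} v0.
Arguments keyA {R n mu f x} iso {v} v0.
Arguments mgt {R n mu f x} iso {v}.
Arguments measurable_h {R n} x.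
Arguments sqnorm_ge0 {R n} x.
Arguments le_sqnorm {R n} x y i.

Theorem corollary2p6 (R : realType) (n : nat)
  (mu : {measure set (n.-tuple R) -> \bar R})
  (f : n.-tuple R -> R) (x : n.-tuple R) (v : R)
  (d : measure_display) (T : measurableType d) (P : probability T R)
  (X : T -> n.-tuple R) :
  (0 < n)%N ->
  is_lebesgue_measure mu ->
  isotropic mu f ->
  0 < v ->
  measurable_fun setT X ->
  (* X has density proportional to g = gtilt f x v (w.r.t. Lebesgue) *)
  (exists2 c : R, 0 < c & forall A : set (n.-tuple R), measurable A ->
      P (X @^-1` A) = (\int[mu]_(y in A) (c * gtilt f x v y)%:E)%E) ->
  [/\ (forall i : 'I_n, P.-integrable setT (fun w => (tnth (X w) i)%:E)),
      (\int[P]_w (sqnorm (vsub (X w) x))%:E <= (n%:R + sqnorm x)%:E)%E &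
      enorm (vsub (meanv P X) x) <= Num.sqrt n%:R + enorm x].
Proof.
move=> n0 leb iso v0 mX [c c0 hP].
set h := fun y : n.-tuple R => sqnorm (vsub y x).
set m := (n%:R + sqnorm x).
have mh : measurable_fun setT h := measurable_h x.
have mhX : measurable_fun setT (fun w => h (X w)) := measurableT_comp mh mX.
have hX0 w : 0 <= h (X w) := sqnorm_ge0 _.
have mf : measurable_fun setT f by case: iso.
have f0 y : 0 <= f y by case: iso.
have gt0 y : 0 <= gtilt f x v y by rewrite /gtilt mulr_ge0 // expR_ge0.
have ctot : (c%:E * \int[mu]_y (gtilt f x v y)%:E = 1)%E.
  rewrite -integralZl //; last first.
    exact: (gt_int iso v0).
  rewrite -(probability_setT P) -[in RHS](@preimage_setT _ _ X) hP //.
  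
have EhX : (\int[P]_w (h (X w))%:E <= m%:E)%E.
  have -> : (\int[P]_w (h (X w))%:E =
      \int[mu]_y ((h y)%:E * (c * gtilt f x v y)%:E))%E.
    rewrite -[LHS]/(\int[P]_(w in X @^-1` setT) ((fun y => (h y)%:E) \o X) w)%E.
    rewrite -(ge0_integral_pushforward mX) //; last 2 first.
      exact/measurable_EFinP.
      by move=> y _; rewrite lee_fin sqnorm_ge0.
    symmetry; apply: dens_change => //.
    - by apply: measurable_funM => //; exact: (mgt iso).
    - by move=> y; rewrite mulr_ge0 // ltW.
    - by move=> y; rewrite lee_fin sqnorm_ge0.
    - exact/measurable_EFinP.
  under eq_integral do rewrite -EFinM mulrCA EFinM.
  rewrite integralZl //; last exact: (hgt_int iso v0).
  rewrite -[leRHS]mule1 -ctot muleCA.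
  by apply: lee_wpmul2l; [rewrite lee_fin ltW|exact: (keyA iso v0)].
have hint : P.-integrable setT (fun w => (h (X w))%:E).
  apply/integrableP; split; first exact/measurable_EFinP.
  under eq_integral do rewrite gee0_abs ?lee_fin //.
  by apply: le_lt_trans EhX _; rewrite ltry.
have cint (r : R) : P.-integrable setT (fun w => r%:E).
  exact: finite_measure_integrable_cst.
have mXi i : measurable_fun setT (fun w => tnth (X w) i).
  exact: measurableT_comp (measurable_tnth i) mX.
have Xint i : P.-integrable setT (fun w => (tnth (X w) i)%:E).
  have gi : P.-integrable setT (fun w => (1 + `|tnth x i|)%:E + (h (X w))%:E).
    exact: integrableD.
  apply: le_integrable gi => //; first exact/measurable_EFinP.
  move=> w _; rewrite -EFinD !abse_EFin lee_fin [leRHS]ger0_norm; last first.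
    by rewrite !addr_ge0.
  have := @abs_le1sq R (tnth (X w) i - tnth x i).
  have := le_sqnorm x (X w) i; rewrite -/(h (X w)).
  have := ler_normB (tnth (X w) i) (tnth x i).
  have := ler_normD (tnth (X w) i - tnth x i) (tnth x i); rewrite subrK.
  lra.
have Yint i : P.-integrable setT (fun w => ((tnth (X w) i - tnth x i) ^+ 2)%:E).
  apply: le_integrable hint => //.
    apply/measurable_EFinP; apply: measurable_funX; exact: measurable_funB.
  move=> w _; rewrite !abse_EFin lee_fin !ger0_norm ?sqr_ge0 //.
  exact: le_sqnorm.
have bnd i : (((tnth (vsub (meanv P X) x) i) ^+ 2)%:E <=
    \int[P]_w ((tnth (X w) i - tnth x i) ^+ 2)%:E)%E.
  set a := fine (\int[P]_w (tnth (X w) i)%:E).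
  have Ea : (\int[P]_w (tnth (X w) i)%:E = a%:E)%E.
    by rewrite fineK // integrable_fin_num // Xint.
  rewrite !tnth_mktuple -/a; set b := a - tnth x i.
  have cst1 (k : R) : (\int[P]_w k%:E = k%:E)%E.
    rewrite -[X in X = _]/(\int[P]_(w in setT) (cst k%:E) w)%E integral_cst //.
    by rewrite [X in (_ * X)%E](probability_setT P) mule1.
  have i1 : P.-integrable setT (fun w => (2 * b * tnth (X w) i)%:E).
    under eq_fun do rewrite EFinM; exact: integrableZl.
  have L : (\int[P]_w ((2 * b * tnth (X w) i)%:E - (2 * b * tnth x i + b ^+ 2)%:E)
      = (b ^+ 2)%:E)%E.
    rewrite integralB_EFin //; last exact: cint.
    under eq_integral do rewrite EFinM.
    rewrite integralZl // Ea cst1 -EFinM -EFinB; congr (_%:E).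
    rewrite /b; ring.
  rewrite -L; apply: le_integral => //.
    exact: integrableB.
  move=> w _; rewrite -EFinB lee_fin -subr_ge0.
  have -> : ((tnth (X w) i - tnth x i) ^+ 2 - (2 * b * tnth (X w) i - (2 * b * tnth x i + b ^+ 2))
    = (tnth (X w) i - tnth x i - b) ^+ 2) by ring.
  exact: sqr_ge0.
have S : ((sqnorm (vsub (meanv P X) x))%:E <= m%:E)%E.
  apply: (le_trans _ EhX); rewrite /sqnorm -sumEFin.
  have -> : (\int[P]_w (h (X w))%:E =
      \sum_(i < n) \int[P]_w ((tnth (X w) i - tnth x i) ^+ 2)%:E)%E.
    rewrite -ge0_integral_sum //.
    - by apply: eq_integral => w _; rewrite /h sqnormE sumEFin.
    - by move=> i; apply/measurable_EFinP; apply: measurable_funX; exact: measurable_funB.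
    - by move=> i w _; rewrite lee_fin sqr_ge0.
  by apply: lee_sum => i _; exact: bnd.
split => //.
rewrite /enorm; apply: (le_trans _ (@sqrtD_le R n%:R (sqnorm x) (ler0n _ _) (sqnorm_ge0 x))).
by apply: ler_wsqrtr; rewrite -lee_fin.
Qed.
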